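(* Let $L>0$, $\bar\alpha\in(0,1)$ and $\rho$ satisfy $-\tfrac{1}{2L}<\rho$ and $-\rho L\ge\frac{1-\bar\alpha}{2}$. Then for every $n\ge2$ there exists an $L$-Lipschitz operator $F:\mathbb R^n\to\mathbb R^n$ with a zero $z^\star$ such that $\langle Fz,z-z^\star\rangle\ge\rho\|Fz\|^2$ for all $z\in\mathbb R^n$, and an initial point $z^0$, such that the sequence generated by $$\bar z^k=z^k-\tfrac1L Fz^k,\qquad z^{k+1}=z^k-\tfrac{\bar\alpha}{L}F\bar z^k$$ does not converge. *)

(* Defs.v *)
From mathcomp Require Import all_boot all_order all_algebra.
From mathcomp Require Import reals.
Set Implicit Arguments. Unset Strict Implicit. Unset Printing Implicit Defensive.
Import Order.TTheory GRing.Theory Num.Theory.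
Local Open Scope ring_scope.

Definition edot (R : realType) (n : nat) (u v : 'rV[R]_n) : R :=
  \sum_(i < n) u 0 i * v 0 i.

Definition enorm (R : realType) (n : nat) (u : 'rV[R]_n) : R :=
  Num.sqrt (edot u u).

Definition lipschitz (R : realType) (n : nat) (L : R) (F : 'rV[R]_n -> 'rV[R]_n) :=
  forall x y, enorm (F x - F y) <= L * enorm (x - y).

Definition converges (R : realType) (n : nat) (z : nat -> 'rV[R]_n) :=
  exists l : 'rV[R]_n, forall eps : R, 0 < eps ->
    exists N : nat, forall k : nat, (N <= k)%N -> enorm (z k - l) < eps.

Fixpoint eg_seq (R : realType) (n : nat) (F : 'rV[R]_n -> 'rV[R]_n)
  (L alpha : R) (z0 : 'rV[R]_n) (k : nat) : 'rV[R]_n :=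
  match k with
  | 0 => z0
  | k'.+1 =>
      let zk := eg_seq F L alpha z0 k' in
      let zbar := zk - L^-1 *: F zk in
      zk - (alpha / L) *: F zbar
  end.

(* Main.v *)
Require Import Defs.
From mathcomp Require Import all_boot all_order all_algebra.
From mathcomp Require Import reals ring lra.
Set Implicit Arguments. Unset Strict Implicit.
Import Order.TTheory GRing.Theory Num.Theory.
Local Open Scope ring_scope.

Lemma sum_two (R : realType) n (i0 i1 : 'I_n) (h : i0 != i1) (f : 'I_n -> R)
  (hf : forall j, j != i0 -> j != i1 -> f j = 0) : \sum_j f j = f i0 + f i1.
Proof.
rewrite (bigD1 i0) //= (bigD1 i1) /=; last by rewrite eq_sym.
rewrite big1 ?addr0 // => j /andP[h0 h1]; exact: hf.
Qed.

Lemma sum_two_ge (R : realType) n (i0 i1 : 'I_n) (h : i0 != i1) (f : 'I_n -> R)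
  (hf : forall j, 0 <= f j) : f i0 + f i1 <= \sum_j f j.
Proof.
rewrite (bigD1 i0) //= (bigD1 i1) /=; last by rewrite eq_sym.
rewrite addrA lerDl; apply: sumr_ge0 => j _; exact: hf.
Qed.

Definition Fop (R : realType) n (i0 i1 : 'I_n) (L c s : R) (z : 'rV[R]_n) : 'rV[R]_n :=
  \row_j (if j == i0 then L * (c * z 0 i0 - s * z 0 i1)
          else if j == i1 then L * (s * z 0 i0 + c * z 0 i1) else 0).

Lemma Fop0 (R : realType) n (i0 i1 : 'I_n) (L c s : R) (h : i0 != i1) z :
  Fop i0 i1 L c s z 0 i0 = L * (c * z 0 i0 - s * z 0 i1).
Proof. by rewrite mxE eqxx. Qed.

Lemma Fop1 (R : realType) n (i0 i1 : 'I_n) (L c s : R) (h : i0 != i1) z :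
  Fop i0 i1 L c s z 0 i1 = L * (s * z 0 i0 + c * z 0 i1).
Proof. by rewrite mxE eq_sym (negbTE h) eqxx. Qed.

Lemma edotF (R : realType) n (i0 i1 : 'I_n) (L c s : R) (h : i0 != i1) z v :
  edot (Fop i0 i1 L c s z) v =
  L * (c * z 0 i0 - s * z 0 i1) * v 0 i0 + L * (s * z 0 i0 + c * z 0 i1) * v 0 i1.
Proof.
rewrite /edot (sum_two h) ?Fop0 ?Fop1 // => j h0 h1.
by rewrite mxE (negbTE h0) (negbTE h1) mul0r.
Qed.

Lemma edot_ge (R : realType) n (i0 i1 : 'I_n) (h : i0 != i1) (w : 'rV[R]_n) :
  w 0 i0 ^+ 2 + w 0 i1 ^+ 2 <= edot w w.
Proof.
rewrite /edot !expr2; apply: (@sum_two_ge R n i0 i1 h (fun j => w 0 j * w 0 j)) => j.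
by rewrite -expr2 sqr_ge0.
Qed.

Lemma edot_ge0 (R : realType) n (w : 'rV[R]_n) : 0 <= edot w w.
Proof. by apply: sumr_ge0 => j _; rewrite -expr2 sqr_ge0. Qed.

Lemma FopB (R : realType) n (i0 i1 : 'I_n) (L c s : R) x y :
  Fop i0 i1 L c s x - Fop i0 i1 L c s y = Fop i0 i1 L c s (x - y).
Proof.
apply/rowP => j; rewrite !mxE.
case: ifP => _; first ring. case: ifP => _; first ring. by rewrite subr0.
Qed.

Lemma step (R : realType) n (i0 i1 : 'I_n) (h : i0 != i1) (L alpha c s : R)
  (hL : L != 0) z0 k :
  let z := eg_seq (Fop i0 i1 L c s) L alpha z0 in
  let gr := 1 - alpha * c + alpha * (c ^+ 2 - s ^+ 2) in
  let gi := - alpha * s + 2 * alpha * c * s in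
  z k.+1 0 i0 = gr * z k 0 i0 - gi * z k 0 i1 /\
  z k.+1 0 i1 = gi * z k 0 i0 + gr * z k 0 i1.
Proof.
move=> z gr gi.
have h' : i1 != i0 by rewrite eq_sym.
rewrite /z /=.
set u := eg_seq _ _ _ _ k.
rewrite !mxE !eqxx !(negbTE h') /gr /gi.
split; field; exact: hL.
Qed.

Lemma edot_FF (R : realType) n (i0 i1 : 'I_n) (h : i0 != i1) (L c s : R)
  (hcs : c ^+ 2 + s ^+ 2 = 1) w :
  edot (Fop i0 i1 L c s w) (Fop i0 i1 L c s w) = L ^+ 2 * (w 0 i0 ^+ 2 + w 0 i1 ^+ 2).
Proof.
rewrite edotF // Fop0 // Fop1 //.
transitivity (L ^+ 2 * ((c ^+ 2 + s ^+ 2) * (w 0 i0 ^+ 2 + w 0 i1 ^+ 2))); first ring.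
by rewrite hcs mul1r.
Qed.

Lemma coord_bound (R : realType) n (i0 i1 : 'I_n) (h : i0 != i1) (x l : 'rV[R]_n) (eps : R) :
  enorm (x - l) < eps ->
  (x 0 i0 - l 0 i0) ^+ 2 + (x 0 i1 - l 0 i1) ^+ 2 < eps ^+ 2.
Proof.
move=> he.
have := edot_ge h (x - l); rewrite !mxE.
have e0 : 0 <= enorm (x - l) := sqrtr_ge0 _.
have := sqr_sqrtr (edot_ge0 (x - l)); rewrite -/(enorm (x - l)) => <-.
move: he e0; set e := enorm _ => he e0 hle.
apply: (le_lt_trans hle). nra.
Qed.

Theorem theorem3p3 (R : realType) (L alpha rho : R)
  (hL : 0 < L) (ha0 : 0 < alpha) (ha1 : alpha < 1)
  (hrho1 : - (1 / (2 * L)) < rho)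
  (hrho2 : (1 - alpha) / 2 <= - (rho * L)) :
  forall n : nat, (2 <= n)%N ->
  exists (F : 'rV[R]_n -> 'rV[R]_n) (zstar z0 : 'rV[R]_n),
    [/\ lipschitz L F,
        F zstar = 0,
        (forall z, rho * (enorm (F z)) ^+ 2 <= edot (F z) (z - zstar))
      & ~ converges (eg_seq F L alpha z0)].
Proof.
move=> n hn.
have h0 : (0 < n)%N by apply: leq_trans hn.
pose i0 : 'I_n := Ordinal h0.
pose i1 : 'I_n := Ordinal hn.
have h : i0 != i1 by [].
pose c : R := - (1 - alpha) / 2.
have hc2 : 0 < 1 - c ^+ 2 by rewrite /c; nra.
pose s : R := Num.sqrt (1 - c ^+ 2).
have hs2 : s ^+ 2 = 1 - c ^+ 2 by rewrite sqr_sqrtr // ltW.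
have hs : 0 < s by rewrite sqrtr_gt0.
have hcs : c ^+ 2 + s ^+ 2 = 1 by rewrite hs2; ring.
pose F := Fop i0 i1 L c s.
pose z0 : 'rV[R]_n := \row_j (if j == i0 then 1 else 0).
exists F, 0, z0; split.
- move=> x y; rewrite /F FopB; set w := x - y.
  rewrite /enorm edot_FF // sqrtrM ?sqr_ge0 // sqrtr_sqr gtr0_norm //.
  apply: ler_wpM2l; first exact: ltW.
  by rewrite ler_sqrt ?edot_ge0 // edot_ge.
- apply/rowP => j; rewrite !mxE !mulr0 subr0 addr0 mulr0; by case: ifP => _ //; case: ifP.
- move=> z; rewrite subr0 /enorm sqr_sqrtr ?edot_ge0 // edot_FF //.
  rewrite /F edotF //.
  have hQ : 0 <= z 0 i0 ^+ 2 + z 0 i1 ^+ 2 by rewrite addr_ge0 ?sqr_ge0.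
  have hcr : rho * L <= c by rewrite /c; lra.
  set Q := _ + _ in hQ *.
  have -> : L * (c * z 0 i0 - s * z 0 i1) * z 0 i0 + L * (s * z 0 i0 + c * z 0 i1) * z 0 i1
     = L * c * Q by rewrite /Q; ring.
  have : 0 <= (c - rho * L) * L * Q.
    by rewrite mulr_ge0 // mulr_ge0 ?subr_ge0 // ltW.
  move=> H; nra.
- pose gr := 1 - alpha * c + alpha * (c ^+ 2 - s ^+ 2).
  pose gi := - alpha * s + 2 * alpha * c * s.
  have hL0 : L != 0 by rewrite gt_eqF.
  have hg : gr ^+ 2 + gi ^+ 2 = 1.
    have -> : gr = 1 - alpha * c + alpha * (2 * c ^+ 2 - 1) by rewrite /gr hs2; ring.
    have -> : gi ^+ 2 = alpha ^+ 2 * s ^+ 2 * (2 * c - 1) ^+ 2 by rewrite /gi; ring.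
    by rewrite hs2 /c; field.
  have hgi : gi ^+ 2 > 0.
    have -> : gi = - (alpha * s * (2 - alpha)) by rewrite /gi /c; field.
    by rewrite sqrrN exprn_gt0 // !mulr_gt0 // subr_gt0; lra.
  set z := eg_seq F L alpha z0.
  have hQ : forall k, z k 0 i0 ^+ 2 + z k 0 i1 ^+ 2 = 1.
    elim=> [|k IH].
      by rewrite /z /= /z0 !mxE eqxx; rewrite (_ : (i1 == i0) = false) //; lra.
    have [-> ->] := @step R n i0 i1 h L alpha c s hL0 z0 k.
    rewrite -/z -/gr -/gi.
    transitivity ((gr ^+ 2 + gi ^+ 2) * (z k 0 i0 ^+ 2 + z k 0 i1 ^+ 2)); first ring.
    by rewrite hg IH mul1r.
  have hd : forall k, (z k.+1 0 i0 - z k 0 i0) ^+ 2 + (z k.+1 0 i1 - z k 0 i1) ^+ 2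
     = (gr - 1) ^+ 2 + gi ^+ 2.
    move=> k; have [-> ->] := @step R n i0 i1 h L alpha c s hL0 z0 k.
    rewrite -/z -/gr -/gi.
    transitivity (((gr - 1) ^+ 2 + gi ^+ 2) * (z k 0 i0 ^+ 2 + z k 0 i1 ^+ 2)); first ring.
    by rewrite hQ mulr1.
  case=> l hl.
  set d := (gr - 1) ^+ 2 + gi ^+ 2.
  have hd0 : 0 < d by rewrite /d ltr_wpDl ?sqr_ge0.
  pose eps := Num.sqrt (d / 8).
  have heps : 0 < eps by rewrite sqrtr_gt0 divr_gt0.
  have heps2 : eps ^+ 2 = d / 8 by rewrite sqr_sqrtr // ltW // divr_gt0.
  have [N hN] := hl eps heps.
  have A := coord_bound h (hN N (leqnn N)).
  have B := coord_bound h (hN N.+1 (leqnSn N)).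
  have := hd N; rewrite -/d => E.
  move: A B E; rewrite heps2.
  set p0 := z N 0 i0; set p1 := z N 0 i1; set q0 := z N.+1 0 i0; set q1 := z N.+1 0 i1.
  move=> A B E.
  have K : forall u v w : R, (u - v) ^+ 2 <= 2 * (u - w) ^+ 2 + 2 * (v - w) ^+ 2.
    move=> u v w; rewrite -subr_ge0.
    have -> : 2 * (u - w) ^+ 2 + 2 * (v - w) ^+ 2 - (u - v) ^+ 2 = (u + v - 2 * w) ^+ 2 by ring.
    exact: sqr_ge0.
  have K0 := K q0 p0 (l 0 i0); have K1 := K q1 p1 (l 0 i1).
  lra.
Qed.
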